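(* Let $G$ be a graph on $[n]$ and let $e$ and $f$ be two crossing edges of $G$ that are crossing closed. Then exactly one of the following holds. (1) There is an edge of $G$ joining a vertex of $e$ to a vertex of $f$. In this case $J(e,f)=G[e\cup f]$, the induced subgraph on the four endpoints of $e$ and $f$ (so $J(e,f)$ is a subgraph of $K_4$). (2) There is no edge of $G$ joining a vertex of $e$ to a vertex of $f$. In this case, writing $e=vv'$ and $f=ww'$ suitably, there are $k\ge 0$ and distinct vertices $x_0,\dots,x_k$ not on $e$ or $f$ such that $J(e,f)$ has vertex set $\{v,v',x_0,\dots,x_k,w',w\}$ and its edges are exactly $vv'$, $ww'$, the path edges $x_0x_1,x_1x_2,\dots,x_{k-1}x_k$, at least one and at most two of the edges $vx_0,v'x_0$, and at least one and at most two of the edges $wx_k,w'x_k$ (with no other edges). Moreover, every vertex of $J(e,f)$ not on $e$ or $f$ (i.e. each $x_i$) is a cut vertex of $G$ that separates $e$ and $f$.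
   Context: All graphs are finite simple graphs with vertex set $[n]=\{1,\dots,n\}$; edges are written $ij$ with $i<j$. Two edges $a_1a_2$ and $b_1b_2$ cross if $a_1<b_1<a_2<b_2$ or $b_1<a_1<b_2<a_2$. For a set $S$ of vertices, $G[S]$ is the induced subgraph of $G$ on $S$; for a set of edges $E$, $G[E]$ is the induced subgraph on the set of endpoints of the edges in $E$. Two crossing edges $e,f$ of $G$ are crossing closed if among all induced connected subgraphs of $G$ containing both $e$ and $f$ there is a unique one that is minimal with respect to containment; this subgraph is denoted $J(e,f)$. A vertex $x$ separates $e$ and $f$ if $e$ and $f$ lie in different connected components of $G\setminus x$. *)

(* Defs.v *)
(* Graphs on [n] are modelled on the vertex type 'I_n
   (i.e. {0,...,n-1}, order-isomorphic to {1,...,n}) by a symmetric,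
   irreflexive adjacency relation adj : rel 'I_n. *)
From mathcomp Require Import all_boot.
Set Implicit Arguments. Unset Strict Implicit. Unset Printing Implicit Defensive.

Section Graphs.
Variable n : nat.
Variable adj : rel 'I_n.

Definition is_edge (i j : 'I_n) : bool := (i < j) && adj i j.

(* edges a1a2 and b1b2 (a1<a2, b1<b2) cross *)
Definition cross (a1 a2 b1 b2 : 'I_n) : Prop :=
  ((a1 < b1) && (b1 < a2) && (a2 < b2)) \/ ((b1 < a1) && (a1 < b2) && (b2 < a2)).

Definition induced (S : {set 'I_n}) : rel 'I_n :=
  [rel x y | [&& x \in S, y \in S & adj x y]].

Definition connected_on (S : {set 'I_n}) : bool :=
  [forall x in S, forall y in S, connect (induced S) x y].

Definition spans_conn (a1 a2 b1 b2 : 'I_n) (S : {set 'I_n}) : bool :=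
  ([set a1; a2; b1; b2] \subset S) && connected_on S.

(* S is the vertex set of J(e,f): the unique minimal induced connected
   subgraph containing e and f (induced subgraphs are ordered by
   containment exactly as their vertex sets). *)
Definition is_J (a1 a2 b1 b2 : 'I_n) (S : {set 'I_n}) : Prop :=
  forall S', minset (spans_conn a1 a2 b1 b2) S' = (S' == S).

Definition crossing_closed (a1 a2 b1 b2 : 'I_n) : Prop :=
  exists S, is_J a1 a2 b1 b2 S.

Definition joined (a1 a2 b1 b2 : 'I_n) : bool :=
  [|| adj a1 b1, adj a1 b2, adj a2 b1 | adj a2 b2].

Definition del_vertex (x : 'I_n) : rel 'I_n := induced [set~ x].

Definition separates (x a1 a2 b1 b2 : 'I_n) : Prop :=
  x \notin [set a1; a2; b1; b2] /\
  forall p q, p \in [set a1; a2] -> q \in [set b1; b2] ->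
    ~~ connect (del_vertex x) p q.

Definition cut_vertex (x : 'I_n) : Prop :=
  exists p q, [/\ p != x, q != x, connect adj p q & ~~ connect (del_vertex x) p q].

End Graphs.

Definition upair (n : nat) (a b c d : 'I_n) : bool :=
  ((a == c) && (b == d)) || ((a == d) && (b == c)).

(* Main.v *)
Require Import Defs.
From mathcomp Require Import all_boot.
From mathcomp Require Import zify.
From Stdlib Require Import Classical.
Set Implicit Arguments. Unset Strict Implicit. Unset Printing Implicit Defensive.

Lemma conn_closed (T : finType) (e : rel T) (D : {set T}) p y :
  connect e p y -> p \in D -> (forall u w, e u w -> w \in D) -> y \in D.
Proof.
move=> /connectP [s Hs ->] Hp HD; elim: s p Hs Hp => //= w s IH p /andP [Hpw Hs] _.
by apply: IH Hs (HD _ _ Hpw).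
Qed.

Lemma conn_restrict n (adj : rel 'I_n) (e : rel 'I_n) p y :
  (forall u w, e u w -> adj u w) -> connect e p y ->
  connect (induced adj [set u | connect e p u]) p y.
Proof.
move=> Hef /connectP [s Hs ->]; elim/last_ind: s Hs => [|s z IH]; first by rewrite /= connect0.
rewrite rcons_path last_rcons => /andP [Hp He].
apply: connect_trans (IH Hp) (connect1 _).
rewrite /induced /= !inE (Hef _ _ He) andbT; apply/andP; split; apply/connectP.
  by exists s.
by exists (rcons s z); rewrite ?rcons_path ?Hp ?He // last_rcons.
Qed.

Lemma induced_sym n (adj : rel 'I_n) S : symmetric adj -> symmetric (induced adj S).
Proof. by move=> Hs x y; rewrite /induced /= Hs andbCA. Qed.

Lemma conn_induced_adj n (adj : rel 'I_n) S x y :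
  connect (induced adj S) x y -> connect adj x y.
Proof.
apply: connect_sub => u w /andP [_ /andP [_ H]]; exact: connect1.
Qed.

Lemma walk_conn n (r : rel 'I_n) (x : nat -> 'I_n) m :
  (forall i, i < m -> r (x i) (x i.+1)) -> forall i, i <= m -> connect r (x 0) (x i).
Proof.
move=> H; elim=> [|i IH] Hi; first exact: connect0.
apply: connect_trans (IH (ltnW Hi)) (connect1 (H _ Hi)).
Qed.

Lemma conn_walk n (r : rel 'I_n) a b : connect r a b ->
  exists (x : nat -> 'I_n) m, [/\ x 0 = a, x m = b & forall i, i < m -> r (x i) (x i.+1)].
Proof.
move=> /connectP [s Hs ->]; exists (fun i => nth a (a :: s) i), (size s); split => //.
  by rewrite -[size s]/((size (a :: s)).-1) nth_last.
move=> i Hi; move/pathP: Hs => /(_ a i Hi) /=.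
by [].
Qed.

Lemma connected_onI n (adj : rel 'I_n) (S : {set 'I_n}) :
  (forall x y, x \in S -> y \in S -> connect (induced adj S) x y) -> connected_on adj S.
Proof.
move=> H; apply/forallP => x; apply/implyP => Hx; apply/forallP => y; apply/implyP => Hy.
exact: H.
Qed.

Lemma connected_onE n (adj : rel 'I_n) (S : {set 'I_n}) x y :
  connected_on adj S -> x \in S -> y \in S -> connect (induced adj S) x y.
Proof.
by move=> /forallP /(_ x) /implyP H Hx Hy; move: (H Hx) => /forallP /(_ y) /implyP; apply.
Qed.

Lemma in_seqset n N (x : nat -> 'I_n) z :
  reflect (exists2 i, i < N & z = x i) (z \in [set x (val i) | i : 'I_N]).
Proof.
apply: (iffP imsetP) => [[i _ ->]|[i Hi ->]]; first by exists (val i) => //; apply: ltn_ord.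
by exists (Ordinal Hi).
Qed.

Lemma in4 (T : finType) (a1 a2 b1 b2 u : T) :
  (u \in [set a1; a2; b1; b2]) = (u \in [set a1; a2]) || (u \in [set b1; b2]).
Proof. by rewrite !inE !orbA. Qed.

Lemma set4U (T : finType) (a1 a2 b1 b2 : T) :
  [set a1; a2; b1; b2] = [set a1; a2] :|: [set b1; b2].
Proof. by apply/setP => u; rewrite !inE !orbA. Qed.

Lemma upairC n (p q a b : 'I_n) : upair p q a b = upair q p a b.
Proof. by rewrite /upair orbC (andbC (p == b)) (andbC (p == a)). Qed.

Lemma pair_adj n (adj : rel 'I_n) a1 a2 p q : symmetric adj -> adj a1 a2 ->
  p \in [set a1; a2] -> q \in [set a1; a2] -> p != q -> adj p q.
Proof.
move=> Hs Ha; rewrite !inE => /orP[]/eqP-> /orP[]/eqP->; rewrite ?eqxx //= => _.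
by rewrite Hs.
Qed.

Lemma other (T : finType) (a b p : T) : a != b -> p \in [set a; b] ->
  exists2 q, [set p; q] = [set a; b] & q != p.
Proof.
move=> Hab; rewrite !inE => /orP[]/eqP->.
  by exists b; last by rewrite eq_sym.
exists a => //.
by apply/setP => u; rewrite !inE orbC.
Qed.

Lemma inA4 (T : finType) (a1 a2 b1 b2 u : T) :
  u \in [set a1; a2] -> u \in [set a1; a2; b1; b2].
Proof. by rewrite !inE => /orP[]->; rewrite ?orbT. Qed.

Lemma inB4 (T : finType) (a1 a2 b1 b2 u : T) :
  u \in [set b1; b2] -> u \in [set a1; a2; b1; b2].
Proof. by rewrite !inE => /orP[]->; rewrite ?orbT. Qed.

Lemma sep_lemma n (adj : rel 'I_n) (adj_sym : symmetric adj) a1 a2 b1 b2 J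
  (Ha : adj a1 a2) (Hb : adj b1 b2) (HJ : is_J adj a1 a2 b1 b2 J) z :
  z \in J -> z \notin [set a1; a2; b1; b2] -> separates adj z a1 a2 b1 b2.
Proof.
move=> HzJ Hz; split; first exact: Hz.
move=> p q Hp Hq; apply/negP => Hc.
set C := [set u | connect (del_vertex adj z) p u].
have Hne : forall u, u \in [set a1; a2; b1; b2] -> u \in [set~ z].
  by move=> u Hu; rewrite !inE; apply/eqP => E; move: Hz; rewrite -E Hu.
have HC : spans_conn adj a1 a2 b1 b2 C.
  apply/andP; split.
    have HA : forall a, a \in [set a1; a2] -> connect (del_vertex adj z) p a.
      move=> a Ha'; case: (eqVneq p a) => [->|Hpa]; first exact: connect0.
      apply: connect1; rewrite /del_vertex /induced /= (pair_adj adj_sym Ha Hp Ha' Hpa).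
      by rewrite !Hne // inA4.
    have HB : forall b, b \in [set b1; b2] -> connect (del_vertex adj z) p b.
      move=> b Hb'; apply: connect_trans Hc _.
      case: (eqVneq q b) => [->|Hqb]; first exact: connect0.
      apply: connect1; rewrite /del_vertex /induced /= (pair_adj adj_sym Hb Hq Hb' Hqb).
      by rewrite !Hne // inB4.
    apply/subsetP => u; rewrite !inE -!orbA => /or4P [] /eqP ->.
    - by apply: HA; rewrite !inE eqxx.
    - by apply: HA; rewrite !inE eqxx orbT.
    - by apply: HB; rewrite !inE eqxx.
    - by apply: HB; rewrite !inE eqxx orbT.
  have Hr : forall u, u \in C -> connect (induced adj C) p u.
    move=> u; rewrite inE => Hu; apply: conn_restrict Hu.
    by move=> u' w /and3P [].
  apply: connected_onI => u w Hu Hw.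
  apply: connect_trans (Hr _ Hw).
  by rewrite (sym_connect_sym (induced_sym C adj_sym)); apply: Hr.
have [C' HC' sub] := minset_exists HC.
have := HJ C'; rewrite HC' => /esym/eqP EC'; subst C'.
have : z \in C by apply: (subsetP sub).
rewrite inE => Hpz.
have : z \in [set~ z].
  apply: (conn_closed Hpz).
    by apply: Hne; rewrite inA4.
  by move=> u w /and3P [].
by rewrite !inE eqxx.
Qed.

Lemma min_exists (P : nat -> Prop) m : P m -> exists m0, P m0 /\ forall m', P m' -> m0 <= m'.
Proof.
elim: m {-2}m (leqnn m) => [|N IH] m Hm Pm.
  by exists m; split=> // m' _; move: Hm; rewrite leqn0 => /eqP->.
destruct (classic (exists m', P m' /\ m' < m)) as [[m' [Pm' Hlt]]|Hno].
  by apply: (IH m') => //; rewrite -ltnS (leq_trans Hlt Hm).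
exists m; split=> // m' Pm'; rewrite leqNgt; apply/negP => Hlt; apply: Hno; exists m'; by split.
Qed.

Lemma joinedI n (adj : rel 'I_n) (adj_sym : symmetric adj) a1 a2 b1 b2 a b :
  a \in [set a1; a2] -> b \in [set b1; b2] -> adj a b -> joined adj a1 a2 b1 b2.
Proof.
by rewrite !inE => /orP[]/eqP-> /orP[]/eqP-> H; rewrite /joined H ?orbT.
Qed.

Lemma distinct4 n (a1 a2 b1 b2 : 'I_n) : a1 < a2 -> b1 < b2 -> cross a1 a2 b1 b2 ->
  a1 != a2 /\ b1 != b2 /\ forall a b, a \in [set a1; a2] -> b \in [set b1; b2] -> a != b.
Proof.
move=> la lb Hc.
have Hc' : (a1 < b1 < a2 /\ a2 < b2) \/ (b1 < a1 < b2 /\ b2 < a2).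
  by case: Hc => /andP [/andP [H1 H2] H3]; [left | right]; rewrite ?H1 ?H2 ?H3.
split; first by rewrite -val_eqE /=; lia.
split; first by rewrite -val_eqE /=; lia.
move=> a b; rewrite !inE => /orP[]/eqP-> /orP[]/eqP->; rewrite -val_eqE /=; lia.
Qed.

Lemma part1 n (adj : rel 'I_n) (adj_sym : symmetric adj) a1 a2 b1 b2 J
  (Ha : adj a1 a2) (Hb : adj b1 b2) (HJ : is_J adj a1 a2 b1 b2 J) :
  joined adj a1 a2 b1 b2 -> J = [set a1; a2; b1; b2].
Proof.
move=> Hj.
set S := [set a1; a2; b1; b2].
have [a [b [Hab HaA HbB]]] : exists a b, [/\ adj a b, a \in [set a1; a2] & b \in [set b1; b2]].
  move: Hj; rewrite /joined => /or4P [] H.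
  - by exists a1, b1; rewrite H !inE !eqxx.
  - by exists a1, b2; rewrite H !inE !eqxx ?orbT.
  - by exists a2, b1; rewrite H !inE !eqxx ?orbT.
  - by exists a2, b2; rewrite H !inE !eqxx ?orbT.
have HS : forall u, u \in S -> connect (induced adj S) a u.
  have HA : forall u, u \in [set a1; a2] -> connect (induced adj S) a u.
    move=> u Hu; case: (eqVneq a u) => [->|Hau]; first exact: connect0.
    by apply: connect1; rewrite /induced /= !inA4 // (pair_adj adj_sym Ha HaA Hu Hau).
  have HB : forall u, u \in [set b1; b2] -> connect (induced adj S) a u.
    move=> u Hu.
    have Hab' : connect (induced adj S) a b.
      by apply: connect1; rewrite /induced /= inA4 // inB4 // Hab.
    apply: connect_trans Hab' _.
    case: (eqVneq b u) => [->|Hbu]; first exact: connect0.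
    by apply: connect1; rewrite /induced /= !inB4 // (pair_adj adj_sym Hb HbB Hu Hbu).
  move=> u; rewrite /S !inE -!orbA => /or4P [] /eqP ->.
  - by apply: HA; rewrite !inE eqxx.
  - by apply: HA; rewrite !inE eqxx orbT.
  - by apply: HB; rewrite !inE eqxx.
  - by apply: HB; rewrite !inE eqxx orbT.
have : minset (spans_conn adj a1 a2 b1 b2) S.
  apply/minsetP; split.
    apply/andP; split; first exact: subxx.
    apply: connected_onI => u w Hu Hw; apply: connect_trans (HS _ Hw).
    by rewrite (sym_connect_sym (induced_sym S adj_sym)); apply: HS.
  move=> B' /andP [HB' _] Hsub; apply/eqP; rewrite eqEsubset Hsub; exact: HB'.
by rewrite HJ => /eqP.
Qed.

Lemma part2 n (adj : rel 'I_n) (adj_sym : symmetric adj) (adj_irr : irreflexive adj) a1 a2 b1 b2 J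
  (Ha : adj a1 a2) (Hb : adj b1 b2) (Hab : a1 != a2) (Hbb : b1 != b2)
  (Hdis : forall a b, a \in [set a1; a2] -> b \in [set b1; b2] -> a != b)
  (HJ : is_J adj a1 a2 b1 b2 J) :
  (~~ joined adj a1 a2 b1 b2 ->
   exists (v v' w w' : 'I_n) (k : nat) (x : nat -> 'I_n),
     [/\ [set v; v'] = [set a1; a2] /\ [set w; w'] = [set b1; b2],
         ({in iota 0 k.+1 &, injective x}),
         (forall i, i <= k -> x i \notin [set a1; a2; b1; b2]),
         J = [set v; v'; w; w'] :|: [set x (val i) | i : 'I_k.+1] &
       [/\
         [/\ adj v v', adj w w',
             (forall i, i < k -> adj (x i) (x i.+1)),
             adj v (x 0) || adj v' (x 0) &
             adj w (x k) || adj w' (x k)],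
         (forall p q, p \in J -> q \in J -> adj p q ->
            [|| upair p q v v', upair p q w w',
                [exists i : 'I_k, upair p q (x i) (x i.+1)],
                upair p q v (x 0), upair p q v' (x 0),
                upair p q w (x k) | upair p q w' (x k)]) &
         (forall i, i <= k ->
            cut_vertex adj (x i) /\ separates adj (x i) a1 a2 b1 b2)]]).
Proof.
move=> Hnj.
have /minsetP [HJs HJmin] : minset (spans_conn adj a1 a2 b1 b2) J by rewrite HJ eqxx.
have HJc : connected_on adj J by case/andP: HJs.
have HAJ : forall u, u \in [set a1; a2] -> u \in J.
  by move=> u Hu; case/andP: HJs => /subsetP H _; apply: H; rewrite inA4.
have HBJ : forall u, u \in [set b1; b2] -> u \in J.
  by move=> u Hu; case/andP: HJs => /subsetP H _; apply: H; rewrite inB4.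
pose walk (x : nat -> 'I_n) m := [/\ x 0 \in [set a1; a2], x m \in [set b1; b2] &
   forall i, i < m -> induced adj J (x i) (x i.+1)].
have [m [[x Hx] Hmin]] : exists m, (exists x, walk x m) /\
    forall m', (exists y, walk y m') -> m <= m'.
  have Hc := connected_onE HJc (HAJ a1 (setU11 _ _)) (HBJ b1 (setU11 _ _)).
  have [x [m [H0 Hm Hs]]] := conn_walk Hc.
  apply: (@min_exists _ m); exists x; split => //; by rewrite ?H0 ?Hm setU11.
have {}Hmin : forall y m', walk y m' -> m <= m' by move=> y m' Hy; apply: Hmin; exists y.
case: (Hx) => Hx0 Hxm Hxs.
have Hxin : forall i, i <= m -> x i \in J.
  case=> [|i] Hi; first exact: HAJ.
  by case/and3P: (Hxs i Hi).
have Hsc : forall i j, i < j -> j <= m -> induced adj J (x i) (x j) -> j = i.+1.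
  move=> i j Hij Hjm Hl.
  pose d := j - i.+1.
  have Hw : walk (fun t => if t <= i then x t else x (t + d)) (m - d).
    split.
    - by rewrite leq0n.
    - have E1 : (m - d <= i) = false by rewrite /d; lia.
      have E2 : m - d + d = m by rewrite /d; lia.
      rewrite E1 E2; exact: Hxm.
    - move=> t Ht /=; case: (ltngtP t i) => Hti.
      + apply: Hxs; lia.
      + have E3 : t.+1 + d = (t + d).+1 by lia.
        rewrite E3; apply: Hxs; rewrite /d; lia.
      + have E3 : t.+1 + d = j by rewrite /d; lia.
        rewrite E3 Hti; exact: Hl.
  have := Hmin _ _ Hw; rewrite /d => Hmd; clear -Hmd Hij Hjm; lia.
have Hinj : forall i j, i < j -> j <= m -> x i != x j.
  move=> i j Hij Hjm; apply/eqP => E.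
  case: (ltnP j m) => Hjm'.
    have Hl : induced adj J (x i) (x j.+1) by rewrite E; exact: Hxs.
    have := Hsc i j.+1 (ltnW Hij) Hjm' Hl.
    by move=> H; clear -H Hij; lia.
  have Hjm2 : j = m by clear -Hjm Hjm'; lia.
  have Hw : walk x i.
    split; [exact: Hx0 | rewrite E Hjm2; exact: Hxm | ].
    move=> t Ht; apply: Hxs; clear -Ht Hij Hjm; lia.
  by have := Hmin _ _ Hw; clear -Hij Hjm; lia.
have HnA : forall i, 0 < i -> i <= m -> x i \notin [set a1; a2].
  move=> i Hi Him; apply/negP => HA.
  have Hw : walk (fun t => x (t + i)) (m - i).
    split => /=; [rewrite add0n; exact: HA | rewrite subnK //; exact: Hxm | ].
    move=> t Ht; rewrite addSn; apply: Hxs; clear -Ht Him; lia.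
  by have := Hmin _ _ Hw; clear -Hi Him; lia.
have HnB : forall i, i < m -> x i \notin [set b1; b2].
  move=> i Hi; apply/negP => HB.
  have Hw : walk x i.
    split; [exact: Hx0 | exact: HB | ].
    move=> t Ht; apply: Hxs; clear -Ht Hi; lia.
  by have := Hmin _ _ Hw; clear -Hi; lia.
have HAadj : forall a i, a \in [set a1; a2] -> 1 < i -> i <= m -> ~~ adj a (x i).
  move=> a i Ha' Hi Him; apply/negP => Hai.
  have Hw : walk (fun t => if t == 0 then a else x (t + i.-1)) (m - i).+1.
    split => /=; [exact: Ha' | | ].
      have -> : (m - i).+1 + i.-1 = m by clear -Hi Him; lia.
      exact: Hxm.
    case=> [|t] Ht /=.
      have -> : 1 + i.-1 = i by clear -Hi; lia.
      rewrite /induced /= HAJ // Hxin //.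
    have -> : t.+2 + i.-1 = (t.+1 + i.-1).+1 by clear; lia.
    apply: Hxs; clear -Ht Hi Him; lia.
  by have := Hmin _ _ Hw; clear -Hi Him; lia.
have HBadj : forall b i, b \in [set b1; b2] -> i.+2 <= m -> ~~ adj (x i) b.
  move=> b i Hb' Him; apply/negP => Hib.
  have Hw : walk (fun t => if t <= i then x t else b) i.+1.
    split => /=; [exact: Hx0 | rewrite ltnn; exact: Hb' | ].
    move=> t Ht; case: (ltngtP t i) => Hti.
    - apply: Hxs; clear -Hti Him; lia.
    - by clear -Ht Hti; lia.
    - rewrite Hti /induced /= Hxin ?HBJ //; clear -Him; lia.
  by have := Hmin _ _ Hw; clear -Him; lia.
have Hm2 : 1 < m.
  case: (ltnP 1 m) => // Hm1.
  have [Hm0|Hm1'] : m = 0 \/ m = 1 by clear -Hm1; lia.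
    by move: (Hdis _ _ Hx0 Hxm); rewrite Hm0 eqxx.
  have := Hxs 0; rewrite Hm1' => /(_ isT) /and3P [_ _ H].
  by move: Hnj; rewrite (joinedI adj_sym Hx0 _ H) //; rewrite -Hm1'.
have Hxs' : forall i, i < m -> adj (x i) (x i.+1).
  by move=> i Hi; case/and3P: (Hxs i Hi).
pose S := [set a1; a2] :|: [set b1; b2] :|: [set x (val i) | i : 'I_m.+1].
have HXS : forall i, i <= m -> x i \in S.
  by move=> i Hi; rewrite in_setU; apply/orP; right; apply/in_seqset; exists i.
have HAS : forall u, u \in [set a1; a2] -> u \in S.
  by move=> u Hu; rewrite /S; apply/setUP; left; apply/setUP; left.
have HBS : forall u, u \in [set b1; b2] -> u \in S.
  by move=> u Hu; rewrite /S; apply/setUP; left; apply/setUP; right.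
have HSJ : S = J.
  apply: HJmin.
    apply/andP; split.
      apply/subsetP => u; rewrite in4 => /orP [Hu|Hu]; [exact: HAS | exact: HBS].
    have HS0 : forall u, u \in S -> connect (induced adj S) (x 0) u.
      have Hw : forall i, i <= m -> connect (induced adj S) (x 0) (x i).
        apply: walk_conn => i Hi.
        by rewrite /induced /= Hxs' // !HXS // ltnW.
      move=> u /setUP [/setUP [HuA|HuB]|/in_seqset [i Hi ->]]; last exact: Hw.
        case: (eqVneq (x 0) u) => [->|Hne]; first exact: connect0.
        apply: connect1; rewrite /induced /= (pair_adj adj_sym Ha Hx0 HuA Hne).
        by rewrite !HAS.
      apply: connect_trans (Hw m (leqnn m)) _.
      case: (eqVneq (x m) u) => [->|Hne]; first exact: connect0.
      apply: connect1; rewrite /induced /= (pair_adj adj_sym Hb Hxm HuB Hne).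
      by rewrite !HBS.
    apply: connected_onI => u w Hu Hw; apply: connect_trans (HS0 _ Hw).
    by rewrite (sym_connect_sym (induced_sym S adj_sym)); apply: HS0.
  apply/subsetP => u /setUP [/setUP [HuA|HuB]|/in_seqset [i Hi ->]].
  - exact: HAJ.
  - exact: HBJ.
  - exact: Hxin.
have [k Hk] : exists k, m = k.+2 by exists m.-2; clear -Hm2; lia.
subst m.
have [v' Ev' Hv'] := other Hab Hx0.
have [w' Ew' Hw'] := other Hbb Hxm.
have Hv'A : v' \in [set a1; a2] by rewrite -Ev' !inE eqxx orbT.
have Hw'B : w' \in [set b1; b2] by rewrite -Ew' !inE eqxx orbT.
have Hnot4 : forall i, i <= k -> x i.+1 \notin [set a1; a2; b1; b2].
  move=> i Hi; rewrite in4 negb_or; apply/andP; split.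
    by apply: HnA => //; clear -Hi; lia.
  by apply: HnB; clear -Hi; lia.
have HJeq : J = [set x 0; v'; x k.+2; w'] :|: [set x i.+1 | i : 'I_k.+1].
  rewrite -HSJ set4U Ev' Ew'; apply/setP => u; apply/idP/idP.
    move=> /setUP [HAB|/in_seqset [i Hi ->]]; first by apply/setUP; left.
    case: i Hi => [|i] Hi; first by apply/setUP; left; apply/setUP; left.
    case: (ltnP i k.+1) => Hik.
      by apply/setUP; right; apply/(in_seqset _ (fun i => x i.+1)); exists i.
    have -> : i = k.+1 by clear -Hi Hik; lia.
    by apply/setUP; left; apply/setUP; right.
  move=> /setUP [HAB|/(in_seqset _ (fun i => x i.+1)) [i Hi ->]]; first by apply/setUP; left.
  by apply/setUP; right; apply/(in_seqset _ x); exists i.+1 => //; clear -Hi; lia.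
exists (x 0), v', (x k.+2), w', k, (fun i => x i.+1).
split.
- by split.
- move=> i j; rewrite !mem_iota /= => Hi Hj E.
  case: (ltngtP i j) => // H.
    by have := Hinj i.+1 j.+1 H; rewrite E eqxx => /(_ _) /negP; clear -Hj; lia.
  by have := Hinj j.+1 i.+1 H; rewrite E eqxx => /(_ _) /negP; clear -Hi; lia.
- exact: Hnot4.
- exact: HJeq.
split.
- split.
  + by rewrite (pair_adj adj_sym Ha Hx0 Hv'A) // eq_sym.
  + by rewrite (pair_adj adj_sym Hb Hxm Hw'B) // eq_sym.
  + by move=> i Hi; apply: Hxs'; clear -Hi; lia.
  + by rewrite Hxs'.
  + by rewrite adj_sym Hxs'.
- pose G p q := [|| upair p q (x 0) v', upair p q (x k.+2) w',
      [exists i : 'I_k, upair p q (x i.+1) (x i.+2)],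
      upair p q (x 0) (x 1), upair p q v' (x 1),
      upair p q (x k.+2) (x k.+1) | upair p q w' (x k.+1)].
  have GC : forall p q, G p q = G q p.
    move=> p q; rewrite /G !(upairC p q).
    have -> : [exists i : 'I_k, upair p q (x i.+1) (x i.+2)] =
              [exists i : 'I_k, upair q p (x i.+1) (x i.+2)].
      by apply: eq_existsb => i; apply: upairC.
    by [].
  have Hcl : forall u, u \in J -> [\/ u = v', u = w' | exists2 t, t <= k.+2 & u = x t].
    move=> u; rewrite HJeq => /setUP [|/(in_seqset _ (fun i => x i.+1)) [i Hi ->]].
      rewrite !inE -!orbA => /or4P [] /eqP ->.
      - by apply: Or33; exists 0.
      - by apply: Or31.
      - by apply: Or33; exists k.+2.
      - by apply: Or32.
    by apply: Or33; exists i.+1 => //; exact: ltnW Hi.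
  have HG1 : forall p q, (p = v' \/ p = w') -> q \in J -> adj p q -> G p q.
    move=> p q Hp Hq Hpq; case: (Hcl q Hq) => [Eq|Eq|[t Ht Eq]]; clear Hq; subst q.
    - case: Hp => Ep; subst p; first by rewrite adj_irr in Hpq.
      by move: Hnj; rewrite adj_sym in Hpq; rewrite (joinedI adj_sym Hv'A Hw'B Hpq).
    - case: Hp => Ep; subst p; last by rewrite adj_irr in Hpq.
      by move: Hnj; rewrite (joinedI adj_sym Hv'A Hw'B Hpq).
    - case: Hp => Ep; subst p.
        case: t Ht Hpq => [|[|t]] Ht Hpq.
        + by rewrite /G /upair !eqxx !orbT.
        + by rewrite /G /upair !eqxx !orbT.
        + by move: (HAadj v' t.+2 Hv'A isT Ht); rewrite Hpq.
      case: (ltngtP t k.+1) => Htk.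
      + by move: (HBadj w' t Hw'B Htk); rewrite adj_sym Hpq.
      + have Et : t = k.+2 by clear -Ht Htk; lia.
        by rewrite Et /G /upair !eqxx !orbT.
      + by rewrite Htk /G /upair !eqxx !orbT.
  have Gpath : forall s, s < k.+2 -> G (x s) (x s.+1).
    move=> s Hs; case: s Hs => [|s] Hs; first by rewrite /G /upair !eqxx !orbT.
    case: (ltngtP s k) => Hsk.
    + rewrite /G; apply/orP; right; apply/orP; right; apply/orP; left.
      by apply/existsP; exists (Ordinal Hsk); rewrite /= /upair !eqxx.
    + by clear -Hs Hsk; lia.
    + by rewrite Hsk /G /upair !eqxx !orbT.
  move=> p q Hp Hq Hpq; change (G p q).
  case: (Hcl p Hp) => [Ep|Ep|[s Hs Ep]].
  + by apply: HG1 => //; left.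
  + by apply: HG1 => //; right.
  case: (Hcl q Hq) => [Eq|Eq|[t Ht Eq]].
  + by rewrite GC; apply: HG1 => //; [left | rewrite adj_sym].
  + by rewrite GC; apply: HG1 => //; [right | rewrite adj_sym].
  subst p q; case: (ltngtP s t) => Hst.
  + have Hl : induced adj J (x s) (x t) by rewrite /induced /= !Hxin.
    have Et := Hsc s t Hst Ht Hl; subst t; exact: Gpath.
  + have Hl : induced adj J (x t) (x s) by rewrite /induced /= !Hxin // adj_sym.
    have Es := Hsc t s Hst Hs Hl; subst s; rewrite GC; exact: Gpath.
  + by rewrite Hst adj_irr in Hpq.
- move=> i Hi.
  have Hsep := sep_lemma adj_sym Ha Hb HJ (Hxin i.+1 (leq_trans Hi (leqnSn _))) (Hnot4 i Hi).
  split => //.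
  exists a1, b1; split.
  + by apply/eqP => E; move: (Hnot4 i Hi); rewrite -E !inE eqxx.
  + by apply/eqP => E; move: (Hnot4 i Hi); rewrite -E !inE eqxx !orbT.
  + apply: (@conn_induced_adj _ _ J).
    by apply: connected_onE HJc _ _; [apply: HAJ; rewrite !inE eqxx | apply: HBJ; rewrite !inE eqxx].
  + by case: Hsep => _ /(_ a1 b1); apply; rewrite !inE eqxx.
Qed.

Unset Implicit Arguments.

Theorem lemma2p4 (n : nat) (adj : rel 'I_n)
  (adj_sym : symmetric adj) (adj_irr : irreflexive adj)
  (a1 a2 b1 b2 : 'I_n)
  (He : is_edge adj a1 a2) (Hf : is_edge adj b1 b2)
  (Hcross : cross a1 a2 b1 b2)
  (Hcc : crossing_closed adj a1 a2 b1 b2)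
  (J : {set 'I_n}) (HJ : is_J adj a1 a2 b1 b2 J) :
  (* (1) *)
  (joined adj a1 a2 b1 b2 -> J = [set a1; a2; b1; b2]) /\
  (* (2) *)
  (~~ joined adj a1 a2 b1 b2 ->
   exists (v v' w w' : 'I_n) (k : nat) (x : nat -> 'I_n),
     [/\ [set v; v'] = [set a1; a2] /\ [set w; w'] = [set b1; b2],
         ({in iota 0 k.+1 &, injective x}),
         (forall i, i <= k -> x i \notin [set a1; a2; b1; b2]),
         J = [set v; v'; w; w'] :|: [set x (val i) | i : 'I_k.+1] &
       [/\ (* edges present *)
         [/\ adj v v', adj w w',
             (forall i, i < k -> adj (x i) (x i.+1)),
             adj v (x 0) || adj v' (x 0) &
             adj w (x k) || adj w' (x k)],
         (* no other edges in J(e,f) *)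
         (forall p q, p \in J -> q \in J -> adj p q ->
            [|| upair p q v v', upair p q w w',
                [exists i : 'I_k, upair p q (x i) (x i.+1)],
                upair p q v (x 0), upair p q v' (x 0),
                upair p q w (x k) | upair p q w' (x k)]) &
         (* every x_i is a cut vertex of G separating e and f *)
         (forall i, i <= k ->
            cut_vertex adj (x i) /\ separates adj (x i) a1 a2 b1 b2)]]).
Proof.
move: He Hf => /andP [la Ha] /andP [lb Hb].
have [Hab [Hbb Hdis]] := distinct4 la lb Hcross.
split; first exact: (@part1 n adj adj_sym a1 a2 b1 b2 J Ha Hb HJ).
exact: (@part2 n adj adj_sym adj_irr a1 a2 b1 b2 J Ha Hb Hab Hbb Hdis HJ).
Qed.
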